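(* Let $K$ be a causal poset with a symmetry group $S$. Then $K$ has a covariant path-frame system if and only if for every pair $o,a\in K$ there is a path joining $a$ to $o$ all of whose generating 1-simplices are invariant under $S_a\cap S_o$.
   Context: A causal poset is a pathwise connected poset $(K,\le)$ with an irreflexive symmetric relation $\perp$ satisfying $o\perp a,\ \tilde o\le o\Rightarrow\tilde o\perp a$; a symmetry group $S$ is a group of bijections of $K$ preserving $\le$ and $\perp$ in both directions; $S_a=\{s\in S:s(a)=a\}$ is the stabilizer of $a$. A 1-simplex is $b=(|b|;\partial_0b,\partial_1b)$ with $\partial_0b,\partial_1b\le|b|$, opposite $\overline b=(|b|;\partial_1b,\partial_0b)$, and $s\in S$ acts by $s(b)=(s(|b|);s(\partial_0b),s(\partial_1b))$; $b$ is invariant under a subgroup $H$ if $s(b)=b$ for all $s\in H$. $\mathrm T_1(K)$: 1-simplices with $\partial_0b\ne|b|\ne\partial_1b$. $\mathrm F(K)$: group generated by $\mathrm T_1(K)$ with $b^{-1}=\overline b$; $S$ acts on words letterwise. A path from $a$ to $o$ is a word $b_n\cdots b_1$ ($b_i\in\mathrm T_1(K)$, possibly empty when $a=o$) with $\partial_1b_1=a$, $\partial_0b_n=o$, $\partial_0b_i=\partial_1b_{i+1}$. A path-frame $P_o$ over a pole $o\in K$ is a choice, for every $a\in K$, of a path $p_{(o,a)}$ from $o$ to $a$, with $p_{(o,o)}=1$ (the empty word). A covariant path-frame system is a family $\{P_o:o\in K\}$ of path-frames such that $s(p_{(a,x)})=p_{(s(a),s(x))}$ for all $a,x\in K$, $s\in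 S$. *)

(* Defs.v *)
From Stdlib Require Import List.
Import ListNotations.
Set Implicit Arguments.

Section CausalPoset.
Variable K : Type.

Record simplex1 := Simplex1 { supp : K ; d0 : K ; d1 : K }.

Definition opp (b : simplex1) : simplex1 := Simplex1 (supp b) (d1 b) (d0 b).

Definition act (s : K -> K) (b : simplex1) : simplex1 :=
  Simplex1 (s (supp b)) (s (d0 b)) (s (d1 b)).

Definition act_word (s : K -> K) (w : list simplex1) : list simplex1 :=
  map (act s) w.

Definition in_T1 (le : K -> K -> Prop) (b : simplex1) : Prop :=
  le (d0 b) (supp b) /\ le (d1 b) (supp b) /\ d0 b <> supp b /\ d1 b <> supp b.

(* A word b_n ... b_1 is represented by the list [b_1; ...; b_n].
   is_path le a p o : p is a path from a to o, i.e. d1 b_1 = a,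
   d0 b_n = o, d0 b_i = d1 b_(i+1), all b_i in T_1(K);
   the empty word is a path from a to o iff a = o. *)
Fixpoint is_path (le : K -> K -> Prop) (a : K) (p : list simplex1) (o : K) : Prop :=
  match p with
  | [] => a = o
  | b :: p' => in_T1 le b /\ d1 b = a /\ is_path le (d0 b) p' o
  end.

Record causal_poset (le perp : K -> K -> Prop) : Prop := {
  cp_refl : forall x, le x x ;
  cp_antisym : forall x y, le x y -> le y x -> x = y ;
  cp_trans : forall x y z, le x y -> le y z -> le x z ;
  cp_connected : forall a o, exists p, is_path le a p o ;
  cp_perp_irrefl : forall x, ~ perp x x ;
  cp_perp_sym : forall x y, perp x y -> perp y x ;
  cp_perp_down : forall o a o', perp o a -> le o' o -> perp o' a
}.

Record symmetry_group (le perp : K -> K -> Prop) (S : (K -> K) -> Prop) : Prop := {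
  sg_id : S (fun x => x) ;
  sg_comp : forall s t, S s -> S t -> S (fun x => s (t x)) ;
  sg_inv : forall s, S s -> exists t, S t /\
             (forall x, t (s x) = x) /\ (forall x, s (t x) = x) ;
  sg_le : forall s, S s -> forall x y, le x y <-> le (s x) (s y) ;
  sg_perp : forall s, S s -> forall x y, perp x y <-> perp (s x) (s y)
}.

Definition stab (S : (K -> K) -> Prop) (a : K) : (K -> K) -> Prop :=
  fun s => S s /\ s a = a.

Definition invariant (H : (K -> K) -> Prop) (b : simplex1) : Prop :=
  forall s, H s -> act s b = b.

Definition path_frame_system (le : K -> K -> Prop) (P : K -> K -> list simplex1) : Prop :=
  (forall o a, is_path le o (P o a) a) /\ (forall o, P o o = []).

Definition covariant (S : (K -> K) -> Prop) (P : K -> K -> list simplex1) : Prop :=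
  forall s, S s -> forall a x, act_word s (P a x) = P (s a) (s x).

Definition has_covariant_path_frame_system (le : K -> K -> Prop)
    (S : (K -> K) -> Prop) : Prop :=
  exists P, path_frame_system le P /\ covariant S P.

End CausalPoset.

(* Main.v *)
Require Import Defs.
From Stdlib Require Import List.
From Stdlib Require Import Classical ClassicalEpsilon FunctionalExtensionality PropExtensionality ProofIrrelevance.
Import ListNotations.

Section Aux.
Variable K : Type.
Variables le perp : K -> K -> Prop.
Variable S : (K -> K) -> Prop.

Lemma map_id_Forall (f : simplex1 K -> simplex1 K) l :
  map f l = l -> Forall (fun c => f c = c) l.
Proof.
  induction l as [|c l IH]; simpl; intros H; constructor.
  - now injection H.
  - apply IH; now injection H.
Qed.

Lemma Forall_map_id (f : simplex1 K -> simplex1 K) l :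
  Forall (fun c => f c = c) l -> map f l = l.
Proof.
  induction 1; simpl; congruence.
Qed.

Lemma act_word_comp (s g : K -> K) (l : list (simplex1 K)) :
  act_word s (act_word g l) = act_word (fun z => s (g z)) l.
Proof.
  unfold act_word; rewrite map_map; reflexivity.
Qed.

Lemma inj_of_S (HS : symmetry_group le perp S) s : S s -> forall x y, s x = s y -> x = y.
Proof.
  intros Hs x y E. destruct (sg_inv HS s Hs) as [t [_ [H1 _]]].
  rewrite <- (H1 x), <- (H1 y), E; reflexivity.
Qed.

Lemma is_path_act (HS : symmetry_group le perp S) s : S s ->
  forall l a o, is_path le a l o -> is_path le (s a) (act_word s l) (s o).
Proof.
  intros Hs l; induction l as [|b l IH]; simpl; intros a o H.
  - now subst.
  - destruct H as [[H1 [H2 [H3 H4]]] [H5 H6]]. repeat split; simpl.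
    + apply (proj1 (sg_le HS s Hs _ _)); assumption.
    + apply (proj1 (sg_le HS s Hs _ _)); assumption.
    + intro E; apply H3; eapply inj_of_S; eauto.
    + intro E; apply H4; eapply inj_of_S; eauto.
    + now subst.
    + now apply IH.
Qed.

Definition orb (a x : K) : K * K -> Prop :=
  fun p => exists s, S s /\ s (fst p) = a /\ s (snd p) = x.

Definition rep (a x : K) : K * K := epsilon (inhabits (a, x)) (orb a x).

Definition gel (a x : K) : K -> K :=
  epsilon (inhabits (fun z => z))
    (fun g => S g /\ g (fst (rep a x)) = a /\ g (snd (rep a x)) = x).

Definition Q (b y : K) : list (simplex1 K) :=
  if excluded_middle_informative (b = y) then []
  else epsilon (inhabits [])
    (fun p => is_path le b p y /\
      Forall (invariant (fun s => stab S b s /\ stab S y s)) p).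

Definition PP (a x : K) : list (simplex1 K) :=
  act_word (gel a x) (Q (fst (rep a x)) (snd (rep a x))).

Hypothesis HS : symmetry_group le perp S.

Lemma rep_spec a x : orb a x (rep a x).
Proof.
  unfold rep. apply epsilon_spec. exists (a, x), (fun z => z).
  simpl; split; auto. apply (sg_id HS).
Qed.

Lemma gel_spec a x : S (gel a x) /\ gel a x (fst (rep a x)) = a /\
   gel a x (snd (rep a x)) = x.
Proof.
  unfold gel. apply epsilon_spec. apply rep_spec.
Qed.

Lemma orb_act t a x : S t -> orb (t a) (t x) = orb a x.
Proof.
  intros Ht. apply functional_extensionality; intros p.
  apply propositional_extensionality; split.
  - intros [s [Hs [E1 E2]]].
    destruct (sg_inv HS t Ht) as [u [Hu [U1 U2]]].
    exists (fun z => u (s z)); split; [apply (sg_comp HS); auto|].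
    rewrite E1, E2; auto.
  - intros [s [Hs [E1 E2]]].
    exists (fun z => t (s z)); split; [apply (sg_comp HS); auto|].
    rewrite E1, E2; auto.
Qed.

Lemma rep_act t a x : S t -> rep (t a) (t x) = rep a x.
Proof.
  intros Ht. unfold rep. rewrite (orb_act t a x Ht).
  f_equal. apply proof_irrelevance.
Qed.

Hypothesis Hinv : forall o a : K, exists p : list (simplex1 K),
      is_path le a p o /\
      Forall (invariant (fun s => stab S a s /\ stab S o s)) p.

Lemma Q_spec b y : is_path le b (Q b y) y /\
      Forall (invariant (fun s => stab S b s /\ stab S y s)) (Q b y).
Proof.
  unfold Q. destruct (excluded_middle_informative (b = y)).
  - subst; simpl; auto.
  - apply epsilon_spec. apply Hinv.
Qed.

Lemma PP_path a x : is_path le a (PP a x) x.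
Proof.
  unfold PP. destruct (gel_spec a x) as [G1 [G2 G3]].
  pose proof (is_path_act HS _ G1 _ _ _ (proj1 (Q_spec (fst (rep a x)) (snd (rep a x))))) as HP.
  rewrite G2, G3 in HP. exact HP.
Qed.

Lemma PP_refl o : PP o o = [].
Proof.
  unfold PP. destruct (gel_spec o o) as [G1 [G2 G3]].
  unfold Q. destruct (excluded_middle_informative _) as [e|n]; [reflexivity|].
  exfalso; apply n. eapply inj_of_S; eauto. congruence.
Qed.

Lemma PP_cov : covariant S PP.
Proof.
  intros s Hs a x. unfold PP. rewrite act_word_comp.
  rewrite (rep_act s a x Hs).
  destruct (gel_spec a x) as [G1 [G2 G3]].
  destruct (gel_spec (s a) (s x)) as [H1 [H2 H3]].
  rewrite (rep_act s a x Hs) in H2, H3.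
  set (g := gel a x) in *. set (g' := gel (s a) (s x)) in *.
  set (b := fst (rep a x)) in *. set (y := snd (rep a x)) in *.
  destruct (sg_inv HS g' H1) as [h [Hh [K1 K2]]].
  pose proof (proj2 (Q_spec b y)) as F.
  unfold act_word. apply map_ext_in. intros c Hc.
  rewrite Forall_forall in F. specialize (F c Hc (fun z => h (s (g z)))).
  assert (Hfix : act (fun z => h (s (g z))) c = c).
  { apply F. unfold stab. repeat split.
    - apply (sg_comp HS); auto. apply (sg_comp HS); auto.
    - rewrite G2, <- H2, K1; reflexivity.
    - apply (sg_comp HS); auto. apply (sg_comp HS); auto.
    - rewrite G3, <- H3, K1; reflexivity. }
  rewrite <- Hfix at 2. destruct c; unfold act; simpl. rewrite !K2; reflexivity.
Qed.

End Aux.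

Theorem proposition4p5 (K : Type) (le perp : K -> K -> Prop)
    (HK : causal_poset le perp) (S : (K -> K) -> Prop)
    (HS : symmetry_group le perp S) :
  has_covariant_path_frame_system le S <->
  (forall o a : K, exists p : list (simplex1 K),
      is_path le a p o /\
      Forall (invariant (fun s => stab S a s /\ stab S o s)) p).
Proof.
  split.
  - intros [P [[HP1 HP2] HC]] o a. exists (P a o). split; auto.
    rewrite Forall_forall. intros c Hc s [[Hs Ea] [_ Eo]].
    pose proof (HC s Hs a o) as E. rewrite Ea, Eo in E.
    pose proof (map_id_Forall _ _ _ E) as F. rewrite Forall_forall in F.
    now apply F.
  - intros Hinv. exists (PP K le S).
    split; [split|].
    + intros; eapply PP_path; eauto.
    + intros; eapply PP_refl; eauto.
    + eapply PP_cov; eauto.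
Qed.
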